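(* Let $q$ be a power of the prime $p$, $n\ge 2$ and $1\le i\le n$. Suppose that $p$ does not divide both of $\binom{n}{i}$ and $\binom{n-1}{i-1}$ (i.e. $p\nmid\binom{n}{i}$ or $p\nmid\binom{n-1}{i-1}$). Then $s_{n,i}(t)$ has no nonzero root (in an algebraic closure of $\mathbb{F}_q$) of multiplicity $m>1$ with $\gcd(m,p)=\gcd(m-1,p)=1$.
   Context: For a prime power $q$ and integers $n\ge 1$, $0\le i\le n$, the $i$-th $(n,q)$-elementary symmetric polynomial is $s_{n,i}(t)=\sum_{0\le j_1<j_2<\dots<j_i\le n-1} t^{q^{j_1}+q^{j_2}+\dots+q^{j_i}}\in\mathbb{F}_p[t]$ (where $p$ is the characteristic of $\mathbb{F}_q$). By convention $s_{n,0}(t)=1$. *)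

(* Defs.v *)
From mathcomp Require Import all_boot all_order all_algebra.
Set Implicit Arguments. Unset Strict Implicit. Unset Printing Implicit Defensive.
Import GRing.Theory.
Local Open Scope ring_scope.

(* The i-th (n,q)-elementary symmetric polynomial
   s_{n,i}(t) = sum_{0<=j_1<...<j_i<=n-1} t^(q^j_1 + ... + q^j_i),
   as a polynomial over an arbitrary ring R (its coefficients are 0/1,
   so over a field of characteristic p this is the image of the F_p[t]
   polynomial). Subsets S of {0..n-1} with #|S| = i index the tuples
   j_1 < ... < j_i. *)
Definition s_poly (R : nzRingType) (q n i : nat) : {poly R} :=
  \sum_(S : {set 'I_n} | #|S| == i) 'X^(\sum_(j in S) q ^ (val j))%N.

(* Main.v *)
Require Import Defs.
From mathcomp Require Import all_boot all_order all_algebra.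
Set Implicit Arguments. Unset Strict Implicit. Unset Printing Implicit Defensive.
Import GRing.Theory.
Local Open Scope ring_scope.

Lemma eS_split n (S : {set 'I_n.+1}) q :
  (\sum_(j in S) q ^ val j)%N =
  ((ord0 \in S) + q * \sum_(j in S | j != ord0) q ^ (val j).-1)%N.
Proof.
rewrite big_distrr /=.
case: (boolP (ord0 \in S)) => h.
  rewrite (bigD1 ord0 h) /= expn0; congr (_ + _)%N.
  apply: eq_bigr => j /andP[_ jn0]; rewrite -expnS prednK // lt0n.
  by apply: contra jn0 => /eqP h0; apply/eqP/val_inj.
rewrite add0n; apply: eq_big => [j|j jS].
  by case: (boolP (j \in S)) => //= jS; apply/esym; apply: contraNneq h => <-.
rewrite -expnS prednK // lt0n; apply: contraNneq h => h0.
by have -> : ord0 = j by apply/val_inj.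
Qed.

Lemma mup0' (L : fieldType) (x : L) : mup x 0 = 0%N.
Proof. rewrite /mup; case: arg_maxnP; first exact: dvdp0.
by move=> [i]; rewrite size_poly0; case: i. Qed.

Lemma sum_pow_pchar (R : comNzRingType) (p k : nat) (I : finType) (P : pred I)
  (F : I -> R) : p \in [pchar R] -> (0 < k)%N ->
  (\sum_(j | P j) F j) ^+ (p ^ k) = \sum_(j | P j) F j ^+ (p ^ k).
Proof.
move=> chp k0.
have pn : [pchar R].-nat (p ^ k)%N.
  by rewrite prime.pnatX (pnatE _ (pcharf_prime chp)) chp.
apply: (big_morph (fun x : R => x ^+ (p ^ k))).
  by move=> a b; rewrite exprDn_pchar.
by rewrite expr0n expn_eq0 (gtn_eqF (prime_gt0 (pcharf_prime chp))).
Qed.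

Lemma deriv_s (L : comNzRingType) (p k n i : nat) :
  p \in [pchar L] -> (0 < k)%N ->
  (s_poly L (p ^ k) n.+1 i)^`() =
  (\sum_(S : {set 'I_n.+1} | #|S| == i)
     (if ord0 \in S then 'X^(\sum_(j in S | j != ord0) (p ^ k) ^ (val j).-1)
      else 0)) ^+ (p ^ k).
Proof.
move=> chp k0.
have chpP : p \in [pchar {poly L}] by rewrite pchar_poly.
rewrite (sum_pow_pchar _ _ chpP k0) /s_poly raddf_sum; apply: eq_bigr => S _.
have q0 : (p ^ k)%:R = 0 :> {poly L} by rewrite natrX pcharf0 // expr0n; case: k k0.
rewrite /=.
rewrite derivXn eS_split; case: (ord0 \in S) => /=.
  rewrite add1n /= -mulr_natr add0n mulrSr natrM q0 mul0r add0r mulr1.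
  by rewrite -exprM mulnC.
by rewrite add0n -mulr_natr natrM q0 mul0r mulr0 expr0n expn_eq0 (gtn_eqF (prime_gt0 (pcharf_prime chp))).
Qed.

Lemma mupX (L : fieldType) (x : L) (G : {poly L}) n :
  G != 0 -> mup x (G ^+ n) = (n * mup x G)%N.
Proof.
move=> G0; elim: n => [|n IH].
  by rewrite expr0 mul0n mupNroot // root1.
by rewrite exprS mupM ?expf_neq0 // IH mulSn.
Qed.

Theorem corollary3p11 (p k n i : nat) (L : closedFieldType) :
  prime p -> (0 < k)%N -> p \in [pchar L] ->
  (2 <= n)%N -> (1 <= i <= n)%N ->
  ~~ (p %| 'C(n, i))%N || ~~ (p %| 'C(n.-1, i.-1))%N ->
  forall x : L, x != 0 -> root (s_poly L (p ^ k) n i) x ->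
  ~ [/\ (1 < mup x (s_poly L (p ^ k) n i))%N,
        coprime (mup x (s_poly L (p ^ k) n i)) p
      & coprime (mup x (s_poly L (p ^ k) n i)).-1 p].
Proof.
move=> pr k0 chp n2 _ _ x _ _ [m1 cm cm1].
case: n n2 m1 cm cm1 => [//|n] _.
set f := s_poly L (p ^ k) n.+1 i => m1 cm cm1.
have fn0 : f != 0 by apply: contraTneq m1 => ->; rewrite mup0'.
have [m [u nru fe]] := multiplicity_XsubC f x; rewrite fn0 /= in nru.
have mE : mup x f = m by rewrite fe mupMr // mup_XsubCX eqxx.
rewrite mE in m1 cm cm1.
case: m m1 cm cm1 mE fe => [//|m] m1 cm cm1 mE fe.
have [G hG] : exists G, f^`() = G ^+ (p ^ k) by eexists; exact: deriv_s.
rewrite fe derivM deriv_exp derivXsubC mul1r /= in hG.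
set v := u^`() * ('X - x%:P) + u *+ m.+1.
have fd : G ^+ (p ^ k) = v * ('X - x%:P) ^+ m.
  by rewrite -hG /v mulrDl -mulrA -exprS mulrnAl -mulrnAr.
have pm1 : ~~ (p %| m.+1)%N by rewrite -prime_coprime // coprime_sym.
have pm : ~~ (p %| m)%N by rewrite -prime_coprime // coprime_sym.
have vx : v.[x] != 0.
  rewrite /v hornerD hornerM hornerXsubC subrr mulr0 add0r hornerMn.
  by rewrite -mulr_natr mulf_neq0 // -(dvdn_pcharf chp).
have vn0 : v != 0 by apply: contraNneq vx => ->; rewrite horner0.
have [G0|Gn0] := eqVneq G 0.
  move: fd; rewrite G0 expr0n expn_eq0 (gtn_eqF (prime_gt0 pr)) /= => /esym/eqP.
  by rewrite mulf_eq0 (negbTE vn0) expf_eq0 polyXsubC_eq0 andbF.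
have := congr1 (mup x) fd; rewrite mupX // mupMr ?rootE ?vx // mup_XsubCX eqxx => hm.
have pk : (p %| p ^ k)%N by rewrite -(prednK k0) expnS dvdn_mulr.
by move: pm; rewrite -hm (dvdn_trans pk) // dvdn_mulr.
Qed.
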